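(* Let $G=(V,E)$ be a finite connected simple graph and $i\in V$ such that $G-i$ is connected. Let $\tilde f:V\to\mathbb{R}$ be a solution of $$\min_{\|g\|_2=1,\ g(i)=0}\ \max_{ab\in E}|g(a)-g(b)|$$ with $\tilde f(j)>0$ for some $j$. Let $T_i^{(c)}$ be the spanning tree obtained by joining each vertex $x\ne i$ to a neighbor minimizing $\tilde f$ (ties broken arbitrarily), and for $j\in V$ let the spread-path from $j$ to $i$ be the path from $j$ to $i$ in $T_i^{(c)}$. Then every spread-path from $j$ to $i$ is a shortest path (in number of edges) from $j$ to $i$ in $G$.
   Context: Under the hypotheses, $\tilde f$ is positive on $V\setminus\{i\}$ and every vertex $x\neq i$ has a neighbor with strictly smaller $\tilde f$-value, so $T_i^{(c)}$ is a spanning tree of $G$. *)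

(* Defs.v *)
From HB Require Import structures.
From mathcomp Require Import all_boot all_order all_algebra.
From mathcomp Require Import reals.
Set Implicit Arguments. Unset Strict Implicit. Unset Printing Implicit Defensive.
Import Order.TTheory GRing.Theory Num.Theory.
Local Open Scope ring_scope.

Definition simple_graph (V : finType) (e : rel V) : Prop :=
  symmetric e /\ irreflexive e.

Definition connected_graph (V : finType) (e : rel V) : Prop :=
  forall x y : V, connect e x y.

Definition del_vertex (V : finType) (e : rel V) (i : V) : rel V :=
  fun a b => [&& a != i, b != i & e a b].

Definition connected_minus (V : finType) (e : rel V) (i : V) : Prop :=
  forall x y : V, x != i -> y != i -> connect (del_vertex e i) x y.

Definition norm2 (R : realType) (V : finType) (g : V -> R) : R :=
  Num.sqrt (\sum_(x : V) g x ^+ 2).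

(* max_{ab in E} |g(a) - g(b)| (all terms are >= 0, so 0 is a neutral start). *)
Definition edge_spread (R : realType) (V : finType) (e : rel V) (g : V -> R) : R :=
  \big[Num.max/0]_(ab : V * V | e ab.1 ab.2) `|g ab.1 - g ab.2|.

Definition feasible (R : realType) (V : finType) (i : V) (g : V -> R) : Prop :=
  norm2 g = 1 /\ g i = 0.

Definition is_minimizer (R : realType) (V : finType) (e : rel V) (i : V)
  (f : V -> R) : Prop :=
  feasible i f /\ forall g : V -> R, feasible i g -> edge_spread e f <= edge_spread e g.

(* p is a parent map of T_i^(c): every x <> i is joined to a neighbour p x
   minimizing f among the neighbours of x (ties broken arbitrarily). *)
Definition spread_parent (R : realType) (V : finType) (e : rel V) (i : V)
  (f : V -> R) (p : V -> V) : Prop :=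
  forall x : V, x != i -> e x (p x) /\ forall y : V, e x y -> f (p x) <= f y.

(* The walk j, p j, ..., p^k j reaches i exactly at step k (the spread-path
   from j to i in T_i^(c), of length k edges), and every walk from j to i in G
   has at least k edges, i.e. the spread-path is a shortest path. *)
Definition spread_path_is_shortest (V : finType) (e : rel V) (i : V)
  (p : V -> V) (j : V) : Prop :=
  exists k : nat,
    [/\ iter k p j = i,
        (forall m : nat, (m < k)%N -> iter m p j != i) &
        (forall s : seq V, path e j s -> last j s = i -> (k <= size s)%N)].

(* Main.v *)
Require Import Defs.
From HB Require Import structures.
From mathcomp Require Import all_boot all_order all_algebra.
From mathcomp Require Import reals lra zify.
Import Order.TTheory GRing.Theory Num.Theory.
Local Open Scope ring_scope.

Lemma dist_exists (V : finType) (e : rel V) (i : V) :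
  connected_graph e ->
  exists d : V -> nat, [/\ d i = 0%N, (forall x, d x = 0%N -> x = i),
    (forall x s, path e x s -> last x s = i -> (d x <= size s)%N),
    (forall x y, e x y -> (d x <= (d y).+1)%N) &
    (forall x, x != i -> exists y, e x y /\ d x = (d y).+1)].
Proof.
move=> hc.
pose P x := fun k : nat => [exists t : k.-tuple V, path e x t && (last x t == i)].
have exP : forall x, exists k, P x k.
  move=> x; have /connectP [s hs hl] := hc x i.
  exists (size s); apply/existsP; exists (in_tuple s); rewrite /= hs -hl eqxx.
  done.
pose d x := ex_minn (exP x).
have dspec : forall x, exists s, [/\ path e x s, last x s = i & size s = d x].
  move=> x; rewrite /d; case: ex_minnP => k /existsP [t /andP [h1 /eqP h2]] _.
  by exists t; rewrite size_tuple.
have dmin : forall x s, path e x s -> last x s = i -> (d x <= size s)%N.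
  move=> x s h1 h2; rewrite /d; case: ex_minnP => k _ hm; apply: hm.
  by apply/existsP; exists (in_tuple s); rewrite /= h1 h2 eqxx.
have dedge : forall x y, e x y -> (d x <= (d y).+1)%N.
  move=> x y hxy; have [s [h1 h2 h3]] := dspec y.
  by rewrite -h3; apply: (dmin x (y :: s)) => //=; rewrite hxy.
exists d; split => //.
- by apply/eqP; rewrite -leqn0; exact: (dmin i [::]).
- move=> x hx; have [s [h1 h2 h3]] := dspec x.
  case: s h1 h2 h3 => [|y s] _ h3 h4; first exact h3.
  by rewrite hx in h4.
- move=> x hx; have [s [h1 h2 h3]] := dspec x.
  case: s h1 h2 h3 => [|y s] /=; first by move=> _ h; rewrite h eqxx in hx.
  move=> /andP [hxy hp] hl hs; exists y; split => //.
  have := dmin y s hp hl; have := dedge x y hxy; lia.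
Qed.

Theorem theorem21 (R : realType) (V : finType) (e : rel V) (i : V)
  (f : V -> R) (p : V -> V) :
  simple_graph e ->
  connected_graph e ->
  connected_minus e i ->
  is_minimizer e i f ->
  (exists j0 : V, 0 < f j0) ->
  spread_parent e i f p ->
  forall j : V, spread_path_is_shortest e i p j.
Proof.
move=> [hsym hirr] hc hcm [[hnf hfi] hmin] [j0 hj0] hp.
have [d [d0 d0i dmin dedge dpred]] := @dist_exists V e i hc.
pose D x : R := (d x)%:R.
have Dge0 : forall x, 0 <= D x by move=> x; rewrite /D ler0n.
have Dge1 : forall x, x != i -> 1 <= D x.
  move=> x hx; rewrite /D (ler_nat R 1); case: (d x) (d0i x) => // h.
  by rewrite (h erefl) eqxx in hx.
have Dedge : forall x y, e x y -> `|D x - D y| <= 1.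
  move=> x y hxy; have h1 := dedge x y hxy.
  have h2 := dedge y x (etrans (esym (hsym x y)) hxy).
  have h1' : D x <= D y + 1 by rewrite /D natr1 (ler_nat R).
  have h2' : D y <= D x + 1 by rewrite /D natr1 (ler_nat R).
  rewrite ler_norml; apply/andP; split; timeout 20 lra.
have j0i : j0 != i by apply/eqP => h; rewrite h hfi ltxx in hj0.
pose S := \sum_x D x ^+ 2.
have Sge0 : 0 <= S by apply: sumr_ge0 => x _; apply: sqr_ge0.
have Sgt0 : 0 < S.
  rewrite /S (bigD1 j0) //=; have := Dge1 _ j0i.
  have : 0 <= \sum_(x | x != j0) D x ^+ 2 by apply: sumr_ge0 => x _; apply: sqr_ge0.
  nra.
pose s := Num.sqrt S.
have s2 : s ^+ 2 = S by rewrite sqr_sqrtr.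
have sgt0 : 0 < s by rewrite sqrtr_gt0.
pose g x := D x / s.
have fg : feasible i g.
  split; last by rewrite /g /D d0 mul0r.
  rewrite /norm2 /g.
  under eq_bigr do rewrite expr_div_n.
  by rewrite -mulr_suml -/S s2 divff ?sqrtr1 // gt_eqF.
pose M := edge_spread e f.
have Mle : M <= 1 / s.
  apply: le_trans (hmin g fg) _.
  apply: bigmax_le => [|[a b] /= hab]; first by rewrite divr_ge0 // ltW.
  rewrite /g -mulrBl normrM (ger0_norm (x := s^-1)); last by rewrite invr_ge0 ltW.
  rewrite mul1r -[X in _ <= X]mul1r ler_pM2r ?invr_gt0 //; exact: Dedge.
have Medge : forall a b, e a b -> `|f a - f b| <= M.
  by move=> a b hab; apply: (le_bigmax_cond _ (P := fun ab : V * V => e ab.1 ab.2) _ (j := (a, b))).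
have Mge0 : 0 <= M.
  have [y [hy _]] := dpred j0 j0i.
  exact: le_trans (normr_ge0 _) (Medge _ _ hy).
have fle : forall n x, d x = n -> `|f x| <= M * D x.
  elim => [|n IH] x hx.
    by rewrite (d0i x hx) hfi normr0 /D d0 mulr0.
  have xi : x != i by apply/eqP => h; rewrite h d0 in hx.
  have [y [hy hd]] := dpred x xi.
  have h1 := IH y (ltac:(lia)).
  have h2 := Medge x y hy.
  have h3 : D x = D y + 1 by rewrite /D hd natr1.
  have t := ler_normD (f x - f y) (f y); rewrite subrK in t.
  rewrite h3 mulrDr mulr1; timeout 20 lra.
have sumf : \sum_x f x ^+ 2 = 1.
  move: hnf; rewrite /norm2 => h.
  by rewrite -(sqr_sqrtr (sumr_ge0 _ (fun x _ => sqr_ge0 (f x)))) h expr1n.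
have fsq : forall x, f x ^+ 2 <= (M * D x) ^+ 2.
  move=> x; have := fle _ x erefl; rewrite -real_normK ?num_real // => h.
  by rewrite !expr2; apply: ler_pM.
pose T := \sum_x (M * D x) ^+ 2.
have TE : T = M ^+ 2 * s ^+ 2.
  by rewrite s2 /S mulr_sumr; apply: eq_bigr => x _; rewrite exprMn.
have T1 : 1 <= T by rewrite -sumf; apply: ler_sum => x _; exact: fsq.
have Ms : M * s <= 1 by rewrite -(ler_pdivlMr _ _ sgt0).
have T2 : T <= 1.
  rewrite TE -exprMn; have := mulr_ge0 Mge0 (ltW sgt0); move: Ms; set u := M * s => Ms hu.
  by rewrite expr2; have := ler_pM hu hu Ms Ms; rewrite mulr1.
have hsq : forall x, f x ^+ 2 = (M * D x) ^+ 2.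
  have h0 : \sum_x ((M * D x) ^+ 2 - f x ^+ 2) = 0.
    rewrite sumrB -/T sumf; timeout 20 lra.
  have hge : forall x, true -> 0 <= (M * D x) ^+ 2 - f x ^+ 2.
    by move=> x _; rewrite subr_ge0.
  move=> x; have := @psumr_eq0P _ _ _ _ hge h0 x erefl.
  move/eqP; rewrite subr_eq0 => /eqP; done.
have Mgt0 : 0 < M.
  by rewrite lt0r Mge0 andbT; apply/eqP => M0; move: T1; rewrite TE M0 expr2 !mul0r ler10.
have step : forall a b, a != i -> b != i -> e a b -> f a = M * D a -> f b = M * D b.
  move=> a b ha hb hab hfa; have /eqP := hsq b; rewrite eqf_sqr => /orP [/eqP //| /eqP hfb].
  have h := ler_norm (f a - f b); have := Medge a b hab.
  have := Dge1 a ha; have := Dge1 b hb; rewrite hfa hfb in h *.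
  move=> hDb hDa hM.
  have k1 := mulr_ge0 (ltW Mgt0) (ltac:(by rewrite subr_ge0) : 0 <= D a - 1).
  have k2 := mulr_ge0 (ltW Mgt0) (ltac:(by rewrite subr_ge0) : 0 <= D b - 1).
  rewrite !mulrBr !mulr1 in k1 k2; timeout 20 lra.
have base : f j0 = M * D j0.
  have /eqP := hsq j0; rewrite eqf_sqr => /orP [/eqP //| /eqP h].
  have := mulr_ge0 Mge0 (Dge0 j0); timeout 20 lra.
have gen : forall s a, path (del_vertex e i) a s -> a != i -> f a = M * D a ->
    f (last a s) = M * D (last a s).
  elim => [|b s' IH] a //= /andP [hab hpth] ha hfa.
  move: hab; rewrite /del_vertex => /and3P [_ hb hab'].
  exact: (IH b hpth hb (step a b ha hb hab' hfa)).
have hall : forall x, f x = M * D x.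
  move=> x; case: (eqVneq x i) => [->|hx]; first by rewrite hfi /D d0 mulr0.
  have /connectP [s' hs hl] := hcm j0 x j0i hx.
  by rewrite hl; apply: gen.
have hpar : forall x, x != i -> d x = (d (p x)).+1.
  move=> x hx; have [hpx hle] := hp x hx; have [y [hy hd]] := dpred x hx.
  have := hle y hy; rewrite !hall ler_pM2l // (ler_nat R) => h1.
  have h2 := dedge x (p x) hpx.
  by apply/eqP; rewrite eqn_leq h2 /= hd ltnS.
move=> j; exists (d j).
clear -hpar d0 d0i dmin.
have it : forall m, (m <= d j)%N -> d (iter m p j) = (d j - m)%N.
  elim => [|m IH] hm; first by rewrite subn0.
  rewrite iterS; have h := IH (ltnW hm).
  have ni : iter m p j != i by apply/eqP => h'; rewrite h' d0 in h; lia.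
  have := hpar _ ni; lia.
split.
- by apply: d0i; rewrite it // subnn.
- move=> m hm; apply/eqP => h; have := it m (ltnW hm); rewrite h d0; lia.
- by move=> s' hs hl; exact: dmin.
Qed.
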